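(* Let $k,h\ge1$ and let $G=\vartheta_{B_k}^{\mathcal B,h}$ be a $k$-molecule. Then (1) the connectivity of $G$ is $k$; (2) $B_k$ is an edge cover set of $G$ of minimum cardinality, so $\mathrm{Cycl}(G)=k$; and (3) $\mathrm{Ent}(G)=k$.
   Context: Graphs are finite and undirected. A graph is $k$-connected if one must remove at least $k$ vertices to disconnect it; the connectivity is the largest such $k$ (by convention the complete graph $K_m$, $m\ge3$, has connectivity $m-1$). $k$-molecule: for $k,h\ge1$, $B_k=\{b_1,\dots,b_k\}$ and a set $\mathcal B$ of edges among vertices of $B_k$, $\vartheta_{B_k}^{\mathcal B,h}$ is the graph with vertex set $B_k\cup\{v_1,\dots,v_h\}$ and edge set $\mathcal B\cup\{v_ib_j:1\le i\le h,1\le j\le k\}$, where it is required that $h\ge k-k'$, $k'$ being the connectivity of the subgraph induced by $B_k$. An edge cover set of $G$ is a set $X\subseteq V_G$ containing at least one endpoint of every edge (i.e. a vertex cover). $\mathrm{Cycl}(G)$ (cyclicity) is the minimum size of a feedback vertex set of the symmetric digraph of $G$ (each edge viewed as two opposite arcs, so each edge forms a directed 2-cycle), which equals the minimum size of an edge cover set. Entanglement: in the game $\mathrm{Ent}(G,k)$ Thief plays against $k$ cops. Initially no cop is placed and Thief picks a vertex. Each round, Cops may do nothing, place a new cop (at most $k$ in total) on Thief's current vertex, or move a placed cop to Thief's current vertex; then Thief must move along an edge to an adjacent vertex not occupied by a cop, and is caught if he cannot. Infinite plays are won by Thief. $\mathrm{Ent}(G)$ is the least $k$ for which Cops have a winning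 strategy. *)

(* Defs.v *)
From mathcomp Require Import all_boot.
Set Implicit Arguments. Unset Strict Implicit. Unset Printing Implicit Defensive.

Definition simple_graph (T : finType) (g : rel T) : Prop :=
  symmetric g /\ irreflexive g.

Definition del_rel (T : finType) (g : rel T) (S : {set T}) : rel T :=
  [rel x y | [&& x \notin S, y \notin S & g x y]].

Definition separates (T : finType) (g : rel T) (S : {set T}) : bool :=
  [exists u, exists v, [&& u \notin S, v \notin S & ~~ connect (del_rel g S) u v]].

Definition kconnected (T : finType) (g : rel T) (n : nat) : bool :=
  [forall S : {set T}, (#|S| < n) ==> ~~ separates g S].

(* Connectivity: the largest n such that G is n-connected, with the convention
   that it is at most #|V| - 1 (so that K_m has connectivity m - 1). *)
Definition connectivity (T : finType) (g : rel T) : nat :=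
  \max_(n < #|T| | kconnected g n) n.

Definition edge_cover (T : finType) (g : rel T) (X : {set T}) : bool :=
  [forall x, forall y, g x y ==> (x \in X) || (y \in X)].

(* Directed cycles of a digraph e (a relation); the symmetric digraph of an
   undirected graph g is g itself viewed as a set of arcs, so each edge gives
   the 2-cycle x -> y -> x. *)
Definition has_dcycle (T : finType) (e : rel T) : bool :=
  [exists x, exists y, e x y && connect e y x].

Definition fvs (T : finType) (g : rel T) (X : {set T}) : bool :=
  ~~ has_dcycle (del_rel g X).

Definition Cycl (T : finType) (g : rel T) : nat :=
  #|[arg min_(X < [set: T] | fvs g X) #|X|]|.

(* Cops are indexed by 'I_k; a cop state maps each cop to its vertex, or None if
   it has not been placed yet.  A Cops' move is an option 'I_k: None = do
   nothing; Some i = put cop i on Thief's current vertex (this is "place a new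
   cop" if cop i is not placed yet, and "move a placed cop" otherwise). *)
Definition cop_state (T : finType) (k : nat) := {ffun 'I_k -> option T}.

Definition apply_cop_move (T : finType) (k : nat) (c : cop_state T k)
    (m : option 'I_k) (thief : T) : cop_state T k :=
  match m with
  | None => c
  | Some i => [ffun j => if j == i then Some thief else c j]
  end.

Definition occupied (T : finType) (k : nat) (c : cop_state T k) (v : T) : bool :=
  [exists i, c i == Some v].

(* A Cops strategy sees the whole history; since cop positions are determined
   by the strategy and Thief's positions, the history is the (nonempty)
   sequence of Thief's positions so far. *)
Definition cop_strategy (T : finType) (k : nat) := seq T -> option 'I_k.

Definition prefix (T : finType) (t : nat -> T) (n : nat) : seq T :=
  map t (iota 0 n.+1).

Fixpoint cops_after (T : finType) (k : nat) (s : cop_strategy T k)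
    (t : nat -> T) (n : nat) : cop_state T k :=
  let prev := match n with
              | 0 => [ffun=> None]
              | n'.+1 => cops_after s t n'
              end in
  apply_cop_move prev (s (prefix t n)) (t n).

Definition thief_legal (T : finType) (g : rel T) (k : nat) (s : cop_strategy T k)
    (t : nat -> T) (n : nat) : Prop :=
  g (t n) (t n.+1) /\ ~~ occupied (cops_after s t n) (t n.+1).

Definition cops_win (T : finType) (g : rel T) (k : nat) : Prop :=
  exists s : cop_strategy T k,
    forall t : nat -> T, ~ (forall n, thief_legal g s t n).

Definition is_Ent (T : finType) (g : rel T) (e : nat) : Prop :=
  cops_win g e /\ forall j, j < e -> ~ cops_win g j.

(* Vertices: inl i = b_(i+1) in B_k, inr i = v_(i+1). *)
Definition molecule (k h : nat) (bB : rel 'I_k) : rel ('I_k + 'I_h)%type :=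
  fun x y =>
    match x, y with
    | inl i, inl j => bB i j
    | inl _, inr _ => true
    | inr _, inl _ => true
    | inr _, inr _ => false
    end.

Definition Bset (k h : nat) : {set ('I_k + 'I_h)%type} :=
  [set x | if x is inl _ then true else false].
Arguments molecule k h bB : clear implicits.
Arguments Bset k h : clear implicits.

(* Main.v *)
Require Import Defs.
From mathcomp Require Import all_boot zify.
Set Implicit Arguments. Unset Strict Implicit. Unset Printing Implicit Defensive.

Section Gen.
Variable T : finType.

Lemma kconn_mono (g : rel T) n m : kconnected g n -> m <= n -> kconnected g m.
Proof.
move=> /forallP H mn; apply/forallP=> S; apply/implyP=> HS.
by move/implyP: (H S); apply; apply: leq_trans HS mn.
Qed.

Lemma kconnP (g : rel T) n (S : {set T}) : kconnected g n -> #|S| < n ->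
  forall u v, u \notin S -> v \notin S -> connect (del_rel g S) u v.
Proof.
move=> /forallP/(_ S)/implyP H /H /existsPn Hs u v uS vS.
move/existsPn: (Hs u) => /(_ v); rewrite uS vS /=. by move/negbNE.
Qed.

Lemma sepI (g : rel T) (S : {set T}) u v : u \notin S -> v \notin S ->
  ~~ connect (del_rel g S) u v -> separates g S.
Proof. by move=> uS vS c; apply/existsP; exists u; apply/existsP; exists v; rewrite uS vS. Qed.

Lemma conn_noout (e : rel T) x u : (forall y, ~~ e x y) -> connect e x u -> u = x.
Proof.
move=> H /connectP [[|y p] /= P ->] //.
by move: P => /andP [exy _]; move: (H y); rewrite exy.
Qed.

Lemma connectivity_eq (g : rel T) c : kconnected g c -> c < #|T| ->
  (forall n, c < n -> n < #|T| -> ~~ kconnected g n) -> connectivity g = c.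
Proof.
move=> kc cT H; apply/eqP; rewrite eqn_leq; apply/andP; split.
  apply/bigmax_leqP => i ki; rewrite leqNgt; apply/negP => ci.
  by move: (H i ci (ltn_ord i)); rewrite ki.
by apply: (@leq_bigmax_cond _ _ (fun i : 'I_#|T| => nat_of_ord i) (Ordinal cT)).
Qed.

Lemma connectivity_k (g : rel T) : 0 < #|T| -> kconnected g (connectivity g).
Proof.
move=> T0. rewrite /connectivity.
have h0 : 0 < #|[pred n : 'I_#|T| | kconnected g n]|.
  apply/card_gt0P; exists (Ordinal T0); rewrite inE.
  by apply/forallP => S; apply/implyP.
have [i0 Hi ->] := eq_bigmax_cond (fun i : 'I_#|T| => nat_of_ord i) h0.
by move: Hi; rewrite inE.
Qed.

Lemma homo_conn (T' : finType) (e : rel T) (e' : rel T') (f : T -> T') x y :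
  (forall a b, e a b -> e' (f a) (f b)) -> connect e x y -> connect e' (f x) (f y).
Proof.
move=> H /connectP [p P ->]; apply/connectP; exists (map f p); last by rewrite last_map.
elim: p x P => //= a p IH x /andP [exa pa]; rewrite H //=; exact: IH.
Qed.

End Gen.

Lemma card_inlr (A B : finType) (X : {set A}) (Y : {set B}) :
  #|(inl @: X) :|: (inr @: Y) : {set (A + B)%type}| = #|X| + #|Y|.
Proof.
rewrite cardsU !card_imset; try by move=> ? ? [].
have -> : (inl @: X) :&: (inr @: Y) = set0 :> {set (A+B)%type}.
  apply/setP => z; rewrite !inE; apply/andP => [[/imsetP [a _ ->] /imsetP [b _]]] //.
by rewrite cards0 subn0.
Qed.

Section Mol.
Variables (k h : nat) (bB : rel 'I_k).
Hypotheses (k1 : 1 <= k) (h1 : 1 <= h) (sg : simple_graph bB)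
  (hc : k - connectivity bB <= h).
Local Notation T := ('I_k + 'I_h)%type.
Local Notation G := (molecule k h bB).

Lemma G_sym : symmetric G.
Proof. case: sg => s _; by move=> [x|x] [y|y] //=; rewrite s. Qed.

Lemma cardT : #|{: T}| = k + h.
Proof. by rewrite card_sum !card_ord. Qed.

Lemma BsetE : Bset k h = inl @: [set: 'I_k].
Proof.
apply/setP => [[x|x]]; rewrite !inE //=.
  by apply/esym/imsetP; exists x; rewrite ?inE.
by apply/esym/imsetP => [[y _]].
Qed.

Lemma cardB : #|Bset k h| = k.
Proof. by rewrite BsetE card_imset ?cardsT ?card_ord // => ? ? []. Qed.

Lemma kB : kconnected bB (k - h).
Proof.
apply: kconn_mono (connectivity_k _ _) _; first by rewrite card_ord.
by rewrite leq_subLR addnC -leq_subLR.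
Qed.

Lemma deg b : k - h <= #|[set l | bB b l]|.
Proof.
rewrite leqNgt; apply/negP => lt.
case: sg => _ irr.
have bS : b \notin [set l | bB b l] by rewrite inE irr.
have : ~~ ([set: 'I_k] \subset [set l | bB b l] :|: [set b]).
  apply/negP => /subset_leq_card; rewrite cardsT card_ord.
  apply/negP; rewrite -ltnNge; apply: (leq_ltn_trans (leq_card_setU _ _)).
  rewrite cards1 addn1. move: lt h1. set c := #|_|. lia.
case/subsetPn => u _; rewrite !inE negb_or => /andP [uS ub].
have := kconnP kB lt bS; rewrite inE in bS.
move=> /(_ u); rewrite inE uS => /(_ isT) /conn_noout H.
suff : u = b by move/eqP; rewrite (negbTE ub).
apply: H => y; rewrite /del_rel /= !inE; by case: (bB b y); rewrite ?andbF.
Qed.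

Lemma indep (I : {set 'I_k}) :
  (forall i l, i \in I -> l \in I -> ~~ bB i l) -> #|I| <= h.
Proof.
move=> Hi; case: (leqP #|I| 1) => [le1|/card_gt1P [i [l [iI lI il]]]].
  exact: leq_trans le1 h1.
rewrite leqNgt; apply/negP => hI.
have cS : #|~: I| < k - h.
  rewrite cardsCs setCK card_ord; have := max_card I; rewrite card_ord.
  move: hI; set c := #|I|; lia.
have := kconnP kB cS (u := i) (v := l); rewrite !inE iI lI => /(_ isT isT) /conn_noout H.
suff : l = i by move/eqP; rewrite eq_sym (negbTE il).
apply: H => y; rewrite /del_rel /= !inE negbK iI /=.
by case yI: (y \in I) => //=; apply: Hi.
Qed.

Lemma conn_G : connectivity G = k.
Proof.
have Ssym : forall S : {set T}, symmetric (del_rel G S).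
  by move=> S x y; rewrite /del_rel /= G_sym andbCA.
apply: connectivity_eq.
- apply/forallP => S; apply/implyP => Sk.
  apply/existsPn => u; apply/existsPn => v; apply/negP; case/and3P => uS vS; apply/negP; rewrite negbK.
  have : ~~ (Bset k h \subset S).
    by apply/negP => /subset_leq_card; rewrite cardB leqNgt Sk.
  case/subsetPn => [[b0|w] Hb0 b0S]; last by rewrite inE in Hb0.
  have claim : forall u, u \notin S -> connect (del_rel G S) u (inl b0).
    move=> [b|w] bS; last by apply: connect1; rewrite /del_rel /= bS b0S.
    case: (boolP [exists w, inr w \notin S]) => [/existsP [w wS]|/existsPn allS].
      apply: (connect_trans (y := inr w)); apply: connect1; by rewrite /del_rel /= ?bS ?wS ?b0S.
    pose S' := [set i | inl i \in S].
    have cS' : #|S'| < k - h.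
      have sub : (inl @: S') :|: (inr @: [set: 'I_h]) \subset S.
        apply/subsetP => z; rewrite inE => /orP [] /imsetP [x]; rewrite inE => xS -> //.
        by have := allS x; rewrite negbK.
      have := subset_leq_card sub; rewrite card_inlr cardsT card_ord.
      move: Sk; set c := #|S|; set c' := #|S'|; lia.
    have := kconnP kB cS' (u := b) (v := b0); rewrite !inE bS b0S => /(_ isT isT).
    by apply: homo_conn => x y; rewrite /del_rel /= !inE.
  apply: connect_trans (claim _ uS) _.
  by rewrite (sym_connect_sym (Ssym S)); apply: claim.
- by rewrite cardT; move: h1; lia.
- move=> n kn; rewrite cardT => nkh; apply/negP => Kn.
  have h0 : 0 < h by [].
  have h2 : 1 < h by move: kn nkh; lia.
  have := kconnP Kn (S := Bset k h) _ (u := inr (Ordinal h0)) (v := inr (Ordinal h2)).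
  rewrite cardB !inE => /(_ kn isT isT) /conn_noout H.
  have : inr (Ordinal h2) = inr (Ordinal h0) :> T.
    by apply: H => [[y|y]]; rewrite /del_rel /= ?inE ?andbF.
  by case.
Qed.

Lemma coverB : edge_cover G (Bset k h).
Proof. apply/forallP=> [[x|x]]; apply/forallP => [[y|y]]; rewrite /Bset !inE /= ?implybT //. Qed.

Lemma coverP X x y : edge_cover G X -> G x y -> (x \in X) || (y \in X).
Proof. by move/forallP/(_ x)/forallP/(_ y)/implyP. Qed.

Lemma cover_min X : edge_cover G X -> k <= #|X|.
Proof.
move=> cX; case: (boolP (Bset k h \subset X)) => [/subset_leq_card|/subsetPn [[b|w] Hb bX]].
- by rewrite cardB.
- pose I := [set i | inl i \notin X].
  have Ih : #|I| <= h.
    apply: indep => i l; rewrite !inE => iX lX; apply/negP => il.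
    by move: (coverP cX (x := inl i) (y := inl l) il); rewrite (negbTE iX) (negbTE lX).
  have allV : forall w, inr w \in X.
    move=> w; move: (coverP cX (x := inl b) (y := inr w) isT); rewrite (negbTE bX). done.
  have sub : (inl @: ~: I) :|: (inr @: [set: 'I_h]) \subset X.
    apply/subsetP => z; rewrite inE => /orP [] /imsetP [x]; rewrite !inE ?negbK => xS -> //.
  have := subset_leq_card sub; rewrite card_inlr cardsT card_ord cardsCs setCK card_ord.
  have := max_card I; rewrite card_ord.
  move: Ih; set c := #|I|; set c' := #|X|; lia.
- by rewrite inE in Hb.
Qed.

Lemma fvsE X : fvs G X = edge_cover G X.
Proof.
apply/idP/idP => H.
- apply/forallP => x; apply/forallP => y; apply/implyP => gxy; apply/negPn/negP.
  rewrite negb_or => /andP [xX yX]; move/negP: H; apply; apply/existsP; exists x.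
  apply/existsP; exists y; rewrite /del_rel /= xX yX gxy /=.
  by apply: connect1; rewrite /= xX yX G_sym.
- apply/existsPn => x; apply/existsPn => y; apply/negP => /andP [+ _].
  rewrite /del_rel /= => /and3P [xX yX gxy].
  by move: (coverP H gxy); rewrite (negbTE xX) (negbTE yX).
Qed.

Lemma Cycl_G : Cycl G = k.
Proof.
have P0 : fvs G [set: T] by rewrite fvsE; apply/forallP => x; apply/forallP => y; rewrite !inE ?orbT ?implybT.
rewrite /Cycl; case: (arg_minnP (fun X : {set T} => #|X|) P0) => X fX minX.
apply/eqP; rewrite eqn_leq; apply/andP; split.
  by apply: leq_trans (minX _ _) _; [rewrite fvsE; exact: coverB | rewrite cardB].
by apply: cover_min; rewrite -fvsE.
Qed.

Definition sK : cop_strategy T k := fun p =>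
  if p is x :: _ then (if nth x p (size p).-1 is inl i then Some i else None) else None.

Lemma nth_prefix (T' : finType) (t : nat -> T') n x : nth x (Defs.prefix t n) n = t n.
Proof. by rewrite /Defs.prefix (nth_map 0) ?size_iota // nth_iota. Qed.

Lemma sK_prefix t n : sK (Defs.prefix t n) = if t n is inl i then Some i else None.
Proof.
rewrite /sK; case E: (Defs.prefix t n) => [|x p].
  by move: (congr1 size E); rewrite /Defs.prefix size_map size_iota.
by rewrite -E /Defs.prefix size_map size_iota /= -/(Defs.prefix t n) nth_prefix.
Qed.

Lemma cops_step t n i : cops_after sK t n i =
  if t n == inl i then Some (inl i) else (if n is n'.+1 then cops_after sK t n' i else None).
Proof.
have H : forall prev, apply_cop_move prev (sK (Defs.prefix t n)) (t n) i =
    if t n == inl i then Some (inl i) else prev i.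
  move=> prev; rewrite sK_prefix; case: (t n) => [i'|w] //=; rewrite ffunE.
  case: (eqVneq i i') => [->|ne]; first by rewrite !eqxx.
  by case: eqP => // [[]] E; move: ne; rewrite E eqxx.
by case: n H => [|n] H /=; rewrite H // ffunE.
Qed.

Lemma cops_inv t n m i : m <= n -> t m = inl i -> cops_after sK t n i = Some (inl i).
Proof.
elim: n => [|n IH] mn tm.
  by move: mn; rewrite leqn0 => /eqP mE; subst m; rewrite cops_step tm eqxx.
rewrite cops_step; case: eqP => // ne.
move: mn; rewrite leq_eqVlt => /orP [/eqP mE|]; first by subst m; case: ne.
by rewrite ltnS => mn; apply: IH.
Qed.

Lemma cops_win_k : cops_win G k.
Proof.
exists sK => t L.
have dist : forall m1 m2 i, m1 < m2 -> t m1 = inl i -> t m2 <> inl i.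
  move=> m1 [|n] i // mn tm1 tm2.
  case: (L n) => _ /negP; apply; apply/existsP; exists i.
  by rewrite (cops_inv (mn : m1 <= n) tm1) tm2.
pose tau m := if t m.*2 is inl _ then m.*2 else m.*2.+1.
have taub : forall m, m.*2 <= tau m <= m.*2.+1.
  by move=> m; rewrite /tau; case: (t m.*2) => _; rewrite leqnn ?leqnSn ?ltnW.
have tauB : forall m, t (tau m) \in Bset k h.
  move=> m; rewrite /tau; case E: (t m.*2) => [i|w]; first by rewrite E inE.
  case: (L m.*2) => + _; rewrite E; by case: (t m.*2.+1) => [i'|w'] //; rewrite inE.
pose f (m : 'I_k.+1) := t (tau m).
have finj : injective f.
  move=> m1 m2; rewrite /f => E.
  have := tauB m1; rewrite inE; case E1: (t (tau m1)) => [i|//] _.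
  have ee : tau m1 = tau m2.
    case: (ltngtP (tau m1) (tau m2)) => // lt.
    - by case: (dist _ _ _ lt E1); rewrite -E.
    - by case: (dist _ _ i lt); rewrite -?E.
  apply/val_inj => /=; move: (taub m1) (taub m2); rewrite ee; lia.
have : f @: [set: 'I_k.+1] \subset Bset k h.
  by apply/subsetP => z /imsetP [m _ ->]; apply: tauB.
move/subset_leq_card; rewrite card_imset // cardsT card_ord cardB; lia.
Qed.

Lemma free_nb j (c : cop_state T j) x : j < k -> exists y, G x y && ~~ occupied c y.
Proof.
move=> jk.
have occ_le : #|[set y | occupied c y]| <= j.
  have sub : [set y | occupied c y] \subset [set odflt x (c i) | i in 'I_j].
    apply/subsetP => y; rewrite inE => /existsP [i /eqP ci].
    by apply/imsetP; exists i; rewrite ?ci.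
  apply: leq_trans (subset_leq_card sub) _.
  by apply: leq_trans (leq_imset_card _ _) _; rewrite card_ord.
have N_ge : k <= #|[set y | G x y]|.
  case: x => [b|w].
  - have sub : (inl @: [set l | bB b l]) :|: (inr @: [set: 'I_h]) \subset [set y | G (inl b) y].
      apply/subsetP => z; rewrite inE => /orP [] /imsetP [x]; rewrite !inE => // xS -> //.
    have := subset_leq_card sub; rewrite card_inlr cardsT card_ord.
    have := deg b; set c1 := #|_|; set c2 := #|_|; lia.
  - have sub : Bset k h \subset [set y | G (inr w) y].
      by apply/subsetP => [[z|z]]; rewrite !inE.
    by have := subset_leq_card sub; rewrite cardB.
have : ~~ ([set y | G x y] \subset [set y | occupied c y]).
  apply/negP => /subset_leq_card; move: occ_le N_ge jk.
  set c1 := #|_|; set c2 := #|_|; lia.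
by case/subsetPn => y; rewrite !inE => gy oy; exists y; rewrite gy.
Qed.

Lemma cops_ext j (s : cop_strategy T j) t t' n :
  (forall i, i <= n -> t i = t' i) -> cops_after s t n = cops_after s t' n.
Proof.
elim: n => [|n IH] H /=.
  by rewrite /Defs.prefix /= H.
have -> : Defs.prefix t n.+1 = Defs.prefix t' n.+1.
  rewrite /Defs.prefix; apply/eq_in_map => i; rewrite mem_iota add0n ltnS => /andP [_]; apply: H.
by rewrite IH ?H // => i ni; apply: H; apply: leq_trans ni _.
Qed.

Lemma no_win j : j < k -> ~ cops_win G j.
Proof.
move=> jk [s Hs].
pose x0 : T := inl (Ordinal k1).
pose cs (p : seq T) := cops_after s (fun i => nth x0 p i) (size p).-1.
pose nxt (p : seq T) := odflt x0 [pick y | G (last x0 p) y && ~~ occupied (cs p) y].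
pose fix hist n := if n is n'.+1 then rcons (hist n') (nxt (hist n')) else [:: x0].
pose t n := last x0 (hist n).
have sz : forall n, size (hist n) = n.+1.
  by elim => [|n IH] //=; rewrite size_rcons IH.
have nthh : forall n i, i <= n -> nth x0 (hist n) i = t i.
  elim => [|n IH] i; first by rewrite leqn0 => /eqP ->.
  rewrite leq_eqVlt => /orP [/eqP ->|]; first by rewrite /t (last_nth x0) /= size_rcons sz.
  rewrite ltnS => ni /=; rewrite nth_rcons sz ltnS ni; exact: IH.
apply: (Hs t) => n; rewrite /thief_legal.
have E : t n.+1 = nxt (hist n) by rewrite /t /= last_rcons.
have Ec : cs (hist n) = cops_after s t n.
  by rewrite /cs sz /=; apply: cops_ext => i ni; apply: nthh.
rewrite E /nxt; case: pickP => [y /andP [gy oy]|none] /=.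
  by rewrite -Ec; split.
have [y /andP [gy oy]] := free_nb (cs (hist n)) (last x0 (hist n)) jk.
by move: (none y); rewrite gy oy.
Qed.

Lemma Ent_G : is_Ent G k.
Proof. split; [exact: cops_win_k | move=> j jk; exact: no_win]. Qed.
End Mol.

Theorem mainTheorem5 (k h : nat) (bB : rel 'I_k) :
  1 <= k -> 1 <= h ->
  simple_graph bB ->
  k - connectivity bB <= h ->
  [/\ connectivity (molecule k h bB) = k,
      edge_cover (molecule k h bB) (Bset k h)
      /\ (forall X, edge_cover (molecule k h bB) X -> #|Bset k h| <= #|X|)
      /\ Cycl (molecule k h bB) = k
    & is_Ent (molecule k h bB) k].
Proof.
move=> k1 h1 sg hc; split.
- exact: (conn_G k1 h1 sg hc).
- split; first exact: coverB.
  split; last exact: (Cycl_G k1 h1 sg hc).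
  by move=> X cX; rewrite cardB; exact: (cover_min k1 h1 hc cX).
- exact: (Ent_G k1 h1 sg hc).
Qed.
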